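(* Fix $k\in\mathbb{Z}_{\geq 0}$ and $X\in\{U,V\}$. For all integers $r$ and $i$: 1. $X_i^r$ is the disjoint union of the sets $X^r_{i,wc}$, $X^r_{i,\overline{wc},\mathrm{left}}$ and $X^r_{i,\overline{wc},\mathrm{right}}$. 2. There is a bijection between $X^r_{i,\overline{wc},\mathrm{right}}$ and $X^r_{i-1,\overline{wc},\mathrm{left}}$ which preserves the value of a word in $\mathcal{A}_k$ (i.e. a word and its image are equal as elements of $\mathcal{A}_k$). 3. The sets $X^r_{0,\overline{wc},\mathrm{right}}$, $V^r_{r-1,\overline{wc},\mathrm{left}}$, $U^r_{r-2,\overline{wc},\mathrm{left}}$, and $X^r_i$ for $i<0$, are empty.
   Context: Indices are elements of $\mathbb{Z}/(k+1)\mathbb{Z}$, identified with $[0,k]=\{0,\dots,k\}$. $\mathcal{A}_k$ is the associative $\mathbb{Z}$-algebra with generators $A_0,\dots,A_k$ subject only to $A_iA_{i+1}A_i=A_{i+1}A_iA_{i+1}$ for all $i$ and $A_iA_j=A_jA_i$ whenever $i-j\not\equiv\pm1 \pmod{k+1}$ (no relation is imposed on $A_i^2$). A word is a finite sequence $(i_1,\dots,i_m)$ of indices, written $A_{i_1\dots i_m}$; its value is $A_{i_1}\cdots A_{i_m}\in\mathcal{A}_k$, its weak length is $\widetilde{l}=m$, and its support $supp$ is the set $\{i_1,\dots,i_m\}$. For a proper subset $S\subsetneq[0,k]$, let $a$ be the smallest element of $[0,k]$ not in $S$; the canonical cyclic interval $I_S$ is the total order $a+1<a+2<\dots<k<0<1<\dots<a-1$.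 A word $u=A_{i_1\dots i_m}$ with $supp(u)$ a proper subset of $[0,k]$ is a weak hook word if, with respect to $I_{supp(u)}$, for some $j$ either (a) $i_1>\dots>i_j<i_{j+1}<\dots<i_m$ (hook type $V$; left side = letters $i_1,\dots,i_j$, right side = letters $i_j,\dots,i_m$), or (b) $i_1>\dots>i_j=i_{j+1}<\dots<i_m$ (hook type $U$; left side = $i_1,\dots,i_j$, right side = $i_{j+1},\dots,i_m$). $asc(u)$ is the number of $t$ with $i_t<i_{t+1}$ in $I_{supp(u)}$. The word $u$ is $k$-connected if $supp(u)$ is an interval of $I_{supp(u)}$. Otherwise, consider all pairs of letters $a<c$ of $u$ (in $I_{supp(u)}$) with $a\not\equiv c-1\pmod{k+1}$ and no letter $b$ of $u$ with $a<b<c$; let $u_{min}$ be the smallest such $c$; it occurs once or twice in $u$ (if twice, then once on each side). $u$ is $k$-weak connected if it is $k$-connected or $u_{min}$ occurs twice (on both sides). For $X\in\{U,V\}$: $X^r_i$ is the set of weak hook words of hook type $X$, weak length $r$ and $asc=i$; $X^r_{i,wc}$ is the subset of $k$-weak connected ones; $X^r_{i,\overline{wc},\mathrm{left}}$ (resp. $X^r_{i,\overline{wc},\mathrm{right}}$) is the subset of words that are not $k$-weak connected and whose unique occurrence of $u_{min}$ is on the left (resp. right) side. *)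

(* Defs.v *)
From HB Require Import structures.
From mathcomp Require Import all_boot all_order all_algebra.
Set Implicit Arguments. Unset Strict Implicit. Unset Printing Implicit Defensive.
Import Order.TTheory GRing.Theory Num.Theory.

(* Indices are 'I_k.+1, i.e. Z/(k+1)Z identified with [0,k]. *)
Definition word (k : nat) := seq 'I_k.+1.

Definition proper_supp k (u : word k) : bool := [exists x : 'I_k.+1, x \notin u].

Definition gap_pt k (u : word k) : nat :=
  find (fun n => n \notin map val u) (iota 0 k.+1).

(* position of x in the canonical cyclic interval I_{supp u}:
   a+1 < a+2 < ... < k < 0 < ... < a-1  (ranks 0,1,...) *)
Definition rank k (u : word k) (x : 'I_k.+1) : nat :=
  (val x + k - gap_pt u) %% k.+1.

Definition ltI k (u : word k) (x y : 'I_k.+1) : bool := rank u x < rank u y.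

Inductive htype := HU | HV.

(* u is a hook of the given type with turning index j (1-based), i.e.
   V : i_1 > ... > i_j < i_{j+1} < ... < i_m
   U : i_1 > ... > i_j = i_{j+1} < ... < i_m   (w.r.t. I_{supp u}) *)
Definition hook_at k (X : htype) (u : word k) (j : nat) : bool :=
  match X with
  | HV => [&& 0 < j <= size u,
             sorted (fun x y => ltI u y x) (take j u)
           & sorted (ltI u) (drop j.-1 u)]
  | HU => [&& 0 < j < size u,
             sorted (fun x y => ltI u y x) (take j u),
             nth ord0 u j.-1 == nth ord0 u j
           & sorted (ltI u) (drop j u)]
  end.

Definition left_side k (u : word k) (j : nat) : word k := take j u.
Definition right_side k (X : htype) (u : word k) (j : nat) : word k :=
  match X with HV => drop j.-1 u | HU => drop j u end.

Definition weak_hook k (X : htype) (u : word k) : Prop :=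
  proper_supp u /\ exists j, hook_at X u j.

Definition asc k (u : word k) : nat :=
  count (fun p => ltI u p.1 p.2) (zip u (behead u)).

Definition kconnected k (u : word k) : bool :=
  [forall x : 'I_k.+1, forall y : 'I_k.+1, forall z : 'I_k.+1,
     [&& x \in u, z \in u, ltI u x y & ltI u y z] ==> (y \in u)].

Definition gap_top k (u : word k) (c : 'I_k.+1) : bool :=
  (c \in u) &&
  [exists a : 'I_k.+1,
     [&& a \in u, ltI u a c, val c != (val a).+1 %% k.+1
       & [forall b : 'I_k.+1, (b \in u) ==> ~~ (ltI u a b && ltI u b c)]]].

Definition is_umin k (u : word k) (c : 'I_k.+1) : bool :=
  gap_top u c && [forall c' : 'I_k.+1, gap_top u c' ==> (rank u c <= rank u c')].

Definition kweak_connected k (u : word k) : Prop :=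
  kconnected u \/ exists c, is_umin u c /\ count_mem c u = 2.

Definition Xset k (X : htype) (r : nat) (i : int) (u : word k) : Prop :=
  [/\ size u = r, weak_hook X u & Posz (asc u) = i].

Definition Xwc k X r i (u : word k) : Prop := Xset X r i u /\ kweak_connected u.

Definition Xleft k X r i (u : word k) : Prop :=
  [/\ Xset X r i u, ~ kweak_connected u &
      exists c j, [/\ is_umin u c, hook_at X u j & c \in left_side u j]].

Definition Xright k X r i (u : word k) : Prop :=
  [/\ Xset X r i u, ~ kweak_connected u &
      exists c j, [/\ is_umin u c, hook_at X u j & c \in right_side X u j]].

Definition Ak_rels k (R : nzRingType) (a : 'I_k.+1 -> R) : Prop :=
  (forall i : 'I_k.+1,
      (a i * a (ordS i) * a i = a (ordS i) * a i * a (ordS i))%R) /\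
  (forall i j : 'I_k.+1, j != ordS i -> i != ordS j ->
      (a i * a j = a j * a i)%R).

(* Two words have the same value in A_k (the Z-algebra presented by the
   generators A_0..A_k and the relations above): by the universal property of
   the presented algebra, this means their products agree in every ring
   with elements satisfying the relations. *)
Definition Ak_eq k (u v : word k) : Prop :=
  forall (R : nzRingType) (a : 'I_k.+1 -> R), Ak_rels a ->
    (\prod_(x <- u) a x = \prod_(x <- v) a x)%R.

(* Main.v *)
Require Import Defs.
From mathcomp Require Import all_boot all_order all_algebra.
From mathcomp Require Import zify.
Import Order.TTheory GRing.Theory Num.Theory.
Set Implicit Arguments. Unset Strict Implicit.


Section Ins.
Variables (T : eqType) (rho : T -> nat).
Implicit Types (c x y m : T) (s L S : seq T).
Definition lt_r := fun x y : T => rho x < rho y.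
Definition gt_r := fun x y : T => rho y < rho x.
Lemma lt_r_trans : transitive lt_r.
Proof. move=> y x z; rewrite /lt_r; exact: ltn_trans. Qed.
Lemma gt_r_trans : transitive gt_r.
Proof. move=> y x z; rewrite /gt_r => h1 h2; exact: ltn_trans h2 h1. Qed.
Lemma lt_r_irr : irreflexive lt_r. Proof. by move=> x; rewrite /lt_r ltnn. Qed.
Lemma gt_r_irr : irreflexive gt_r. Proof. by move=> x; rewrite /gt_r ltnn. Qed.

Definition ins (c : T) (s : seq T) :=
  let n := find (fun x => rho x < rho c) s in take n s ++ c :: drop n s.

Lemma ins_nil c : ins c [::] = [:: c]. Proof. by []. Qed.
Lemma ins_cons c x s :
  ins c (x :: s) = if rho x < rho c then c :: x :: s else x :: ins c s.
Proof. by rewrite /ins /=; case: ifP. Qed.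

Lemma ins_cat_lt c L y s : rho y < rho c -> ins c (L ++ y :: s) = ins c L ++ y :: s.
Proof.
move=> hy; elim: L => [|x L IH] /=; first by rewrite ins_cons hy.
by rewrite !ins_cons; case: ifP => _ //=; rewrite IH.
Qed.

Lemma perm_ins c s : perm_eq (ins c s) (c :: s).
Proof.
elim: s => [|x s IH] //; rewrite ins_cons; case: ifP => _ //.
apply: (perm_trans (y := x :: c :: s)); first by rewrite perm_cons.
by apply/permP => p /=; rewrite addnCA.
Qed.

Lemma mem_ins c s : ins c s =i c :: s.
Proof. exact: perm_mem (perm_ins c s). Qed.
Lemma size_ins c s : size (ins c s) = (size s).+1.
Proof. exact: perm_size (perm_ins c s). Qed.

Hypothesis rho_inj : injective rho.

Lemma path_ins c x s : c \notin s -> rho c < rho x -> path gt_r x s -> path gt_r x (ins c s).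
Proof.
elim: s x => [|y s IH] x /=; first by rewrite /gt_r => _ ->.
rewrite inE negb_or => /andP [cy cs] cx /andP [yx ps].
rewrite ins_cons; case: ifP => hy /=; first by rewrite /gt_r cx hy ps.
rewrite yx /=; apply: IH => //.
have : rho y != rho c by apply: contra cy => /eqP /rho_inj ->.
rewrite neq_ltn hy /=; done.
Qed.

Lemma sorted_ins c s : c \notin s -> sorted gt_r s -> sorted gt_r (ins c s).
Proof.
case: s => [|y s] //= cs ps; rewrite ins_cons; case: ifP => hy /=.
  by rewrite {1}/gt_r hy ps.
move: cs; rewrite inE negb_or => /andP [cy cs].
apply: path_ins => //.
have : rho y != rho c by apply: contra cy => /eqP /rho_inj ->.
by rewrite neq_ltn hy.
Qed.

Lemma filter_notin c s : c \notin s -> filter (predC1 c) s = s.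
Proof.
move=> cs; apply/all_filterP/allP => x xs /=.
by apply: contraNneq cs => <-.
Qed.

Lemma filter_ins c s : c \notin s -> filter (predC1 c) (ins c s) = s.
Proof.
move=> cs; rewrite /ins filter_cat /= eqxx /= -filter_cat cat_take_drop.
exact: filter_notin.
Qed.

Lemma ins_drop c L : sorted gt_r L ->
  forall x, x \in drop (find (fun x => rho x < rho c) L) L -> rho x < rho c.
Proof.
elim: L => [|y L IH] //= pL x; case: ifP => hy.
  rewrite drop0 inE => /orP [/eqP -> //|xL].
  have := order_path_min gt_r_trans pL => /allP /(_ x xL).
  rewrite /gt_r => h; exact: ltn_trans h hy.
exact: IH (path_sorted pL) x.
Qed.

Lemma rem_filter1 c s : count_mem c s = 1 -> rem c s = filter (predC1 c) s.
Proof.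
elim: s => [|y s IH] //=; case: eqP => [->|ne] /=.
  rewrite add1n => -[h]; rewrite filter_notin //.
  by rewrite -has_pred1 has_count h.
by rewrite add0n => h; rewrite IH.
Qed.

Definition mv c s := ins c (filter (predC1 c) s).
Definition mvr c s := rev (mv c (rev s)).

Lemma perm_mv c s : count_mem c s = 1 -> perm_eq (mv c s) s.
Proof.
move=> h; apply: (perm_trans (perm_ins _ _)).
rewrite perm_sym -rem_filter1 //; apply: perm_to_rem.
by rewrite -has_pred1 has_count h.
Qed.

Lemma perm_mvr c s : count_mem c s = 1 -> perm_eq (mvr c s) s.
Proof.
move=> h; rewrite /mvr perm_rev.
have p := @perm_mv c (rev s); rewrite count_rev in p.
by apply: perm_trans (p h) _; rewrite perm_rev.
Qed.

Lemma Ff c L m S : c \notin L -> c != m -> rho m < rho c ->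
  mv c (L ++ m :: S) = ins c L ++ m :: filter (predC1 c) S.
Proof.
move=> cL cm mc; rewrite /mv filter_cat /= eq_sym cm filter_notin //.
exact: ins_cat_lt.
Qed.

Lemma Fg c L m S : c \notin S -> c != m -> rho m < rho c ->
  mvr c (L ++ m :: S) = filter (predC1 c) L ++ m :: rev (ins c (rev S)).
Proof.
move=> cS cm mc; rewrite /mvr /mv filter_rev filter_cat /= eq_sym cm (@filter_notin c S cS).
set fL := filter _ L.
have -> : rev (fL ++ m :: S) = rev S ++ m :: rev fL by rewrite rev_cat rev_cons cat_rcons.
by rewrite ins_cat_lt // rev_cat rev_cons revK cat_rcons.
Qed.

Lemma rev_ins_cons c m S : rho m < rho c ->
  rev (ins c (rev (m :: S))) = m :: rev (ins c (rev S)).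
Proof.
move=> mc; rewrite rev_cons -cats1 ins_cat_lt // rev_cat /=.
by [].
Qed.

Lemma sorted_rev_lt s : sorted lt_r (rev s) = sorted gt_r s.
Proof. by rewrite rev_sorted. Qed.
Lemma sorted_rev_gt s : sorted gt_r (rev s) = sorted lt_r s.
Proof. by rewrite rev_sorted. Qed.

End Ins.

Section K.
Variable k : nat.
Implicit Types (u v : word k) (x y z c a b m : 'I_k.+1).

Lemma gap_has u : proper_supp u -> has (fun n => n \notin map val u) (iota 0 k.+1).
Proof.
move=> /existsP [x xu]; apply/hasP; exists (val x).
  by rewrite mem_iota /= ltn_ord.
by rewrite mem_map //; exact: val_inj.
Qed.

Lemma gap_pt_lt u : proper_supp u -> gap_pt u < k.+1.
Proof. by move=> pu; have := gap_has pu; rewrite has_find size_iota. Qed.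

Lemma gap_notin u : proper_supp u -> forall x, val x = gap_pt u -> x \notin u.
Proof.
move=> pu x hx; have := nth_find 0 (gap_has pu).
rewrite nth_iota ?add0n -/(gap_pt u) ?gap_pt_lt // -hx.
by apply: contra => xu; apply: map_f.
Qed.

Lemma rankE u x : proper_supp u -> rank u x = (val x + (k - gap_pt u)) %% k.+1.
Proof.
by move=> pu; rewrite /rank addnBA // -ltnS gap_pt_lt.
Qed.

Lemma rank_lt u x : rank u x < k.+1.
Proof. by rewrite /rank ltn_mod. Qed.

Lemma rank_inj u : proper_supp u -> injective (rank u).
Proof.
move=> pu x y; rewrite !rankE // => /eqP; rewrite eqn_modDr !modn_small ?ltn_ord //.
by move=> /eqP; apply: val_inj.
Qed.

Lemma rank_ordS u x : proper_supp u -> rank u (ordS x) = (rank u x).+1 %% k.+1.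
Proof.
move=> pu; rewrite !rankE // /= modnDml.
by rewrite -[X in _ = X %% _]addn1 modnDml addn1 addSn.
Qed.

Lemma rank_in u x : proper_supp u -> x \in u -> rank u x < k.
Proof.
move=> pu xu; have gl := gap_pt_lt pu.
have : rank u x != rank u (Ordinal gl).
  apply: contra (gap_notin pu (x := Ordinal gl) erefl) => /eqP /(rank_inj pu) <-.
  done.
have gle : gap_pt u <= k by rewrite -ltnS.
rewrite [rank u (Ordinal _)](rankE _ pu) /= subnKC // modn_small //.
by have := rank_lt u x; rewrite ltnS leq_eqVlt => /orP [/eqP ->|]; rewrite ?eqxx.
Qed.

Lemma gap_pt_eq u v : u =i v -> gap_pt u = gap_pt v.
Proof.
move=> e; rewrite /gap_pt; apply: eq_find => n /=; congr negb.
by apply/mapP/mapP => -[x xu ->]; exists x; rewrite // ?e // -e.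
Qed.

Lemma rank_eq u v : u =i v -> rank u = rank v.
Proof. by move=> e; rewrite /rank (gap_pt_eq e). Qed.

Lemma ltI_eq u v : u =i v -> ltI u = ltI v.
Proof. by move=> e; rewrite /ltI (rank_eq e). Qed.

Lemma proper_eq u v : u =i v -> proper_supp u = proper_supp v.
Proof. by move=> e; apply: eq_existsb => x; rewrite e. Qed.

Lemma kconnected_eq u v : u =i v -> kconnected u = kconnected v.
Proof.
move=> e; rewrite /kconnected (ltI_eq e).
apply: eq_forallb => x; apply: eq_forallb => y; apply: eq_forallb => z.
by rewrite !e.
Qed.

Lemma gap_top_eq u v : u =i v -> gap_top u =1 gap_top v.
Proof.
move=> e c; rewrite /gap_top (ltI_eq e) e; congr andb.
apply: eq_existsb => a; rewrite e; congr andb; congr andb; congr andb.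
by apply: eq_forallb => b; rewrite e.
Qed.

Lemma is_umin_eq u v : u =i v -> is_umin u =1 is_umin v.
Proof.
move=> e c; rewrite /is_umin (gap_top_eq e) (rank_eq e); congr andb.
by apply: eq_forallb => c'; rewrite (gap_top_eq e).
Qed.

Lemma kweak_eq u v : perm_eq u v -> kweak_connected u <-> kweak_connected v.
Proof.
move=> p; have e := perm_mem p; rewrite /kweak_connected (kconnected_eq e).
split=> -[h|[c [h1 h2]]]; (try by left); right; exists c.
  by rewrite -(is_umin_eq e) -(permP p).
by rewrite (is_umin_eq e) (permP p).
Qed.

End K.

Section K.
Variable k : nat.
Implicit Types (u v : word k) (x y z c a b m : 'I_k.+1) (L T R : word k).

Lemma umin_exists u : proper_supp u -> ~~ kconnected u -> exists c, is_umin u c.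
Proof.
move=> pu /forallPn [x /forallPn [y /forallPn [z]]].
rewrite negb_imply => /andP [/and4P [xu zu xy yz] yu].
rewrite /ltI in xy yz.
pose P := fun c => (c \in u) && (rank u y < rank u c).
have Pz : P z by rewrite /P zu.
case: (@arg_minnP _ z P (rank u) Pz) => c /andP [cu yc] cmin.
pose Q := fun a => (a \in u) && (rank u a < rank u y).
have Qx : Q x by rewrite /Q xu.
case: (@arg_maxnP _ x Q (rank u) Qx) => a /andP [au ay] amax.
have gc : gap_top u c.
  rewrite /gap_top cu /=; apply/existsP; exists a; rewrite au /ltI.
  apply/and4P; split => //.
  - exact: ltn_trans ay yc.
  - apply/eqP => e; have ec : c = ordS a by apply: val_inj.
    have := rank_ordS a pu; rewrite -ec modn_small.
      by move=> h; move: ay yc; rewrite h; lia.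
    by have := rank_lt u y; lia.
  - apply/forallP => b; apply/implyP => bu; apply/negP => /andP [ab bc].
    case: (ltngtP (rank u b) (rank u y)) => h.
    + have := amax b; rewrite /Q bu h => /(_ isT); lia.
    + have := cmin b; rewrite /P bu h => /(_ isT); lia.
    + by move/(rank_inj pu): h => e; rewrite -e bu in yu.
case: (@arg_minnP _ c (gap_top u) (rank u) gc) => c' gc' cmin'.
exists c'; rewrite /is_umin gc' /=; apply/forallP => d; apply/implyP; exact: cmin'.
Qed.

Lemma umin_uniq u c c' : proper_supp u -> is_umin u c -> is_umin u c' -> c = c'.
Proof.
move=> pu /andP [g1 /forallP f1] /andP [g2 /forallP f2].
apply: (rank_inj pu); apply/eqP; rewrite eqn_leq.
by rewrite (implyP (f1 c')) // (implyP (f2 c)).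
Qed.

Lemma umin_gap u c : is_umin u c -> c \in u /\ exists2 a, a \in u & rank u a < rank u c.
Proof.
move=> /andP [/andP [cu /existsP [a /and4P [au ac _ _]]] _]; split => //.
by exists a.
Qed.

Lemma umin_comm u c x : proper_supp u -> is_umin u c -> x \in u ->
  rank u x < rank u c -> x != ordS c /\ c != ordS x.
Proof.
move=> pu /andP [/andP [cu /existsP [a /and4P [au ac ne /forallP fb]]] _] xu xc.
have ck := rank_in pu cu; have xk := rank_in pu xu.
split.
  apply/eqP => e; have := rank_ordS c pu; rewrite -e modn_small; lia.
apply/eqP => e; have := rank_ordS x pu; rewrite -e modn_small; last lia.
move=> hc; have := fb x; rewrite xu /= /ltI xc andbT => hax.
have ax : a = x.
  apply: (rank_inj pu); move: ac; rewrite /ltI hc => ac; lia.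
by move: ne; rewrite e ax eqxx.
Qed.

Definition dec X (rho : 'I_k.+1 -> nat) u L m T : Prop :=
  [/\ u = L ++ m :: T, sorted (gt_r rho) (rcons L m),
      sorted (lt_r rho) (if X is HV then m :: T else T)
    & (X = HU -> exists R, T = m :: R)].

Definition rs X m T : word k := if X is HV then m :: T else T.

Lemma hook_dec X u j : hook_at X u j -> exists L m T,
  [/\ dec X (rank u) u L m T, left_side u j = rcons L m & right_side X u j = rs X m T].
Proof.
case: X => /=.
  move=> /and4P [/andP [j0 js] sl /eqP e sr].
  have j1 : j.-1 < size u by lia.
  exists (take j.-1 u), (nth ord0 u j.-1), (drop j u).
  have ht : take j u = rcons (take j.-1 u) (nth ord0 u j.-1) by rewrite -take_nth // prednK.
  have hd : drop j.-1 u = nth ord0 u j.-1 :: drop j u by rewrite (drop_nth ord0 j1) prednK.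
  split => //; split => //.
  - by rewrite -hd cat_take_drop.
  - by rewrite -ht.
  - move=> _; exists (drop j.+1 u); by rewrite e (drop_nth ord0 js).
move=> /and3P [/andP [j0 js] sl sr].
have j1 : j.-1 < size u by lia.
exists (take j.-1 u), (nth ord0 u j.-1), (drop j u).
have ht : take j u = rcons (take j.-1 u) (nth ord0 u j.-1) by rewrite -take_nth // prednK.
have hd : drop j.-1 u = nth ord0 u j.-1 :: drop j u by rewrite (drop_nth ord0 j1) prednK.
split => //.
split => //.
- by rewrite -hd cat_take_drop.
- by rewrite -ht.
- by rewrite -hd.
Qed.

Lemma dec_hook X u L m T : dec X (rank u) u L m T ->
  [/\ hook_at X u (size L).+1, left_side u (size L).+1 = rcons L m
    & right_side X u (size L).+1 = rs X m T].
Proof.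
move=> [eu sl sr hU].
have ht : take (size L).+1 u = rcons L m.
  by rewrite eu -cat_rcons take_size_cat // size_rcons.
have hd : drop (size L) u = m :: T by rewrite eu drop_size_cat.
have hd1 : drop (size L).+1 u = T by rewrite eu -cat_rcons drop_size_cat // size_rcons.
case: X sr hU => sr hU /=.
  have [R eT] := hU erefl.
  rewrite /left_side ht hd1; split => //.
  apply/and4P; split => //.
  - by rewrite eu size_cat eT /=; lia.
  - by rewrite eu nth_cat ltnn subnn nth_cat ltnNge leqnSn /= subSnn eT.
rewrite /left_side ht hd; split => //.
apply/and3P; split => //.
by rewrite eu size_cat /=; lia.
Qed.

Lemma dec_L X rho u L m T : dec X rho u L m T -> forall x, x \in L -> rho m < rho x.
Proof.
move=> [_ sl _ _] x xL.
have h : sorted (lt_r rho) (rev (rcons L m)) by rewrite rev_sorted.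
rewrite rev_rcons /= in h.
have := order_path_min (@lt_r_trans _ rho) h => /allP /(_ x).
by rewrite mem_rev => /(_ xL).
Qed.

Lemma dec_T X rho u L m T : dec X rho u L m T -> sorted (lt_r rho) T /\ forall x, x \in T -> rho m <= rho x.
Proof.
case: X => -[_ _ sr hU].
  have [R eT] := hU erefl; split => // x; rewrite eT inE => /orP [/eqP -> //|xR].
  rewrite eT /= in sr.
  have := order_path_min (@lt_r_trans _ rho) sr => /allP /(_ x xR) h.
  exact: ltnW.
split; first exact: path_sorted sr.
move=> x xT; have := order_path_min (@lt_r_trans _ rho) sr => /allP /(_ x xT) h.
exact: ltnW.
Qed.

Lemma dec_min X rho u L m T : dec X rho u L m T -> forall x, x \in u -> rho m <= rho x.
Proof.
move=> d x; have [eu _ _ _] := d; rewrite eu mem_cat inE => /or3P [xL|/eqP ->//|xT].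
  exact: ltnW (dec_L d xL).
exact: (dec_T d).2.
Qed.

Lemma dec_uniq X rho u L m T : dec X rho u L m T -> [/\ m \notin L, uniq L & uniq T].
Proof.
move=> d; have [_ sl _ _] := d.
have := sorted_uniq (@gt_r_trans _ rho) (@gt_r_irr _ rho) sl.
rewrite rcons_uniq => /andP [-> ->]; split => //.
apply: (sorted_uniq (@lt_r_trans _ rho) (@lt_r_irr _ rho)); exact: (dec_T d).1.
Qed.

Lemma dec_count X rho u L m T c : dec X rho u L m T -> c != m -> c \in u ->
  count_mem c u != 2 -> (c \in L) && (c \notin T) || (c \notin L) && (c \in T).
Proof.
move=> d cm; have [eu _ _ _] := d; have [_ uL uT] := dec_uniq d.
have mc : (m == c) = false by rewrite eq_sym (negbTE cm).
rewrite eu count_cat /= (count_uniq_mem _ uL) (count_uniq_mem _ uT) mc.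
rewrite mem_cat inE (negbTE cm) /=.
by case: (c \in L); case: (c \in T).
Qed.

Lemma dec_split L1 L2 T1 T2 m : m \notin L1 -> m \notin L2 ->
  L1 ++ m :: T1 = L2 ++ m :: T2 -> L1 = L2 /\ T1 = T2.
Proof.
move=> h1 h2 e.
have s : size L1 = size L2.
  have := congr1 (index m) e; rewrite !index_cat (negbTE h1) (negbTE h2) /= eqxx !addn0.
  done.
by move/eqP: e; rewrite eqseq_cat // => /andP [/eqP -> /eqP [->]].
Qed.

Definition nasc (rho : 'I_k.+1 -> nat) x (s : word k) :=
  count (fun p => rho p.1 < rho p.2) (zip (x :: s) s).

Lemma nasc_cat rho x s1 s2 : nasc rho x (s1 ++ s2) = nasc rho x s1 + nasc rho (last x s1) s2.
Proof.
elim: s1 x => [|y s1 IH] x //=.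
by rewrite /nasc /= -/(nasc rho y (s1 ++ s2)) IH -/(nasc rho y s1) addnA.
Qed.

Lemma nasc_gt rho x s : path (gt_r rho) x s -> nasc rho x s = 0.
Proof.
elim: s x => [|y s IH] x //= /andP [h p].
rewrite /nasc /= -/(nasc rho y s) IH //.
by rewrite /gt_r in h; rewrite ltnNge ltnW.
Qed.

Lemma nasc_lt rho x s : path (lt_r rho) x s -> nasc rho x s = size s.
Proof.
elim: s x => [|y s IH] x //= /andP [h p].
rewrite /lt_r in h; by rewrite /nasc /= -/(nasc rho y s) IH // h.
Qed.

Lemma asc_dec X u L m T : dec X (rank u) u L m T ->
  asc u = if X is HV then size T else (size T).-1.
Proof.
move=> d; have [eu sl sr hU] := d.
have h : asc u = nasc (rank u) m T.
  rewrite /asc /ltI; move: sl; move: (rank u) => rho sl.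
  rewrite eu; case: L {d eu} sl => [|y L] sl //=.
  rewrite -/(nasc rho y (L ++ m :: T)) -cat_rcons nasc_cat last_rcons.
  by rewrite nasc_gt.
rewrite h; case: X sr hU {d} => sr hU.
  have [R eT] := hU erefl; rewrite eT in sr *.
  by rewrite /nasc /= ltnn -/(nasc (rank u) m R) nasc_lt.
exact: nasc_lt.
Qed.

End K.

Section K.
Variable k : nat.
Implicit Types (u v : word k) (x y z c a b m : 'I_k.+1) (L T R : word k).

Definition umin_of u := [pick c | is_umin u c].
Definition fm u : word k := if umin_of u is Some c then mv (rank u) c u else u.
Definition gm u : word k := if umin_of u is Some c then mvr (rank u) c u else u.

Lemma umin_ofE u c : proper_supp u -> is_umin u c -> umin_of u = Some c.
Proof.
move=> pu uc; rewrite /umin_of; case: pickP => [c' h|/(_ c)]; last by rewrite uc.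
by rewrite (umin_uniq pu h uc).
Qed.

Lemma prod_move (Rg : nzRingType) (f : 'I_k.+1 -> Rg) (A B C : word k) c :
  (forall x, x \in B -> f c * f x = f x * f c)%R ->
  (\prod_(x <- A ++ B ++ c :: C) f x = \prod_(x <- A ++ c :: B ++ C) f x)%R.
Proof.
move=> H.
have hc : (f c * \prod_(x <- B) f x = \prod_(x <- B) f x * f c)%R.
  elim: B H => [|y B IH] H; first by rewrite big_nil mulr1 mul1r.
  rewrite big_cons mulrA H ?mem_head // -!mulrA IH // => x xB; apply: H.
  by rewrite inE xB orbT.
rewrite !big_cat /= !big_cons big_cat /=; congr (_ * _)%R.
by rewrite mulrA -hc -mulrA.
Qed.

Lemma setup X r i u c j : Xset X r i u -> ~ kweak_connected u -> is_umin u c -> hook_at X u j ->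
  exists L m T, [/\ dec X (rank u) u L m T, left_side u j = rcons L m,
    right_side X u j = rs X m T, c != m & rank u m < rank u c] /\
    (count_mem c u = 1 /\ ((c \in L) && (c \notin T) || (c \notin L) && (c \in T))).
Proof.
move=> [su [pu _] ai] nkw um /hook_dec [L [m [T [d hl hr]]]].
have [cu [a au ac]] := umin_gap um.
have mc : rank u m < rank u c by have := dec_min d au; lia.
have cm : c != m by apply: contraTneq mc => ->; rewrite ltnn.
have c2 : count_mem c u != 2.
  by apply/eqP => h; apply: nkw; right; exists c.
have dj := dec_count d cm cu c2.
exists L, m, T; split => //; split => //.
have [eu _ _ _] := d; have [_ uL uT] := dec_uniq d.
have mc' : (m == c) = false by rewrite eq_sym (negbTE cm).
rewrite eu count_cat /= (count_uniq_mem _ uL) (count_uniq_mem _ uT) mc'.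
by move: dj; case: (c \in L); case: (c \in T).
Qed.

Lemma right_setup X r i u : Xright X r i u -> exists c L m T,
  [/\ proper_supp u, is_umin u c, dec X (rank u) u L m T, c != m & rank u m < rank u c] /\
  [/\ count_mem c u = 1, c \notin L, c \in T, Xset X r i u & ~ kweak_connected u].
Proof.
move=> [xs nkw [c [j [um hj cr]]]].
have [L [m [T [[d hl hr cm mc] [cnt dj]]]]] := setup xs nkw um hj.
have pu : proper_supp u by case: xs => _ [].
have cT : c \in T by move: cr; rewrite hr; case: (X) => //=; rewrite inE (negbTE cm).
exists c, L, m, T; split => //; split => //.
by move: dj; rewrite cT /=; case: (c \in L).
Qed.

Lemma left_setup X r i u : Xleft X r i u -> exists c L m T,
  [/\ proper_supp u, is_umin u c, dec X (rank u) u L m T, c != m & rank u m < rank u c] /\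
  [/\ count_mem c u = 1, c \in L, c \notin T, Xset X r i u & ~ kweak_connected u].
Proof.
move=> [xs nkw [c [j [um hj cl]]]].
have [L [m [T [[d hl hr cm mc] [cnt dj]]]]] := setup xs nkw um hj.
have pu : proper_supp u by case: xs => _ [].
have cL : c \in L by move: cl; rewrite hl mem_rcons inE (negbTE cm).
exists c, L, m, T; split => //; split => //.
by move: dj; rewrite cL /=; case: (c \in T).
Qed.

End K.

Section K.
Variable k : nat.
Implicit Types (u v : word k) (x y z c a b m : 'I_k.+1) (L T R : word k).

Lemma f_right X r i u : Xright X r i u ->
  [/\ Xleft X r (i - 1)%R (fm u), Ak_eq u (fm u) & gm (fm u) = u].
Proof.
move=> /right_setup [c [L [m [T [[pu um d cm mc] [cnt cL cT xs nkw]]]]]].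
have [su _ ai] := xs.
have [eu sl sr hU] := d.
have inj := rank_inj pu.
set rho := rank u.
have fE : fm u = ins rho c L ++ m :: filter (predC1 c) T.
  rewrite /fm (umin_ofE pu um).
  by have := Ff T cL cm mc; rewrite -eu.
have p : perm_eq (fm u) u by rewrite /fm (umin_ofE pu um); exact: perm_mv.
have e : fm u =i u := perm_mem p.
have rk : rank (fm u) = rank u := rank_eq e.
have pu' : proper_supp (fm u) by rewrite (proper_eq e).
have um' : is_umin (fm u) c by rewrite (is_umin_eq e).
have [sT mT] := dec_T d.
have [_ uL uT] := dec_uniq d.
have cfT : c \notin filter (predC1 c) T by rewrite mem_filter /= eqxx.
have sL : sorted (gt_r rho) L.
  exact: (subseq_sorted (@gt_r_trans _ rho) (subseq_rcons L m) sl).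
have d' : dec X (rank (fm u)) (fm u) (ins rho c L) m (filter (predC1 c) T).
  rewrite rk; split => //.
  - rewrite -cats1 -(ins_cat_lt L [::] mc) cats1; apply: (sorted_ins inj) => //.
    by rewrite mem_rcons inE (negbTE cm).
  - case: (X) sr => sr.
      exact: (subseq_sorted (@lt_r_trans _ rho) (filter_subseq _ _) sr).
    apply: (subseq_sorted (@lt_r_trans _ rho) _ sr).
    by rewrite /= eqxx filter_subseq.
  - move=> /hU [R' eT]; exists (filter (predC1 c) R'); rewrite eT /=.
    by rewrite eq_sym cm.
have sfT : size (filter (predC1 c) T) = (size T).-1.
  by rewrite -rem_filter1 ?size_rem // (count_uniq_mem _ uT) cT.
have [hk hl hr] := dec_hook d'.
split.
- split; last first.
  + exists c, (size (ins rho c L)).+1; split => //.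
    by rewrite hl mem_rcons inE mem_ins inE eqxx orbT.
  + by move/(kweak_eq p).
  split; first by rewrite (perm_size p).
    by split => //; exists (size (ins rho c L)).+1.
  rewrite (asc_dec d') sfT; rewrite (asc_dec d) in ai; rewrite -ai.
  case: (X) hU {d d' hk hl hr sr} => hU.
    have [R' eT] := hU erefl; rewrite eT inE (negbTE (cm)) /= in cT.
    rewrite eT /=; case: (R') cT => // y R'' _ /=.
    by rewrite -[(size _).+1]addn1 PoszD addrK.
  case: (T) cT => // y T' _ /=.
  by rewrite -[(size _).+1]addn1 PoszD addrK.
- move=> Rg f [_ relc].
  have [T1 [T2 eT]] : exists T1 T2, T = T1 ++ c :: T2.
    case/splitPr: cT => T1 T2; by exists T1, T2.
  have := uT; rewrite eT cat_uniq /= => /and4P [_ h1 h2 _].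
  have cT1 : c \notin T1 by apply: contra h1 => ->.
  have fT : filter (predC1 c) T = T1 ++ T2 by rewrite eT filter_cat /= eqxx /= !filter_notin.
  rewrite fE fT {1}eu eT /ins.
  set n := find _ L.
  have -> : L ++ m :: T1 ++ c :: T2 = take n L ++ (drop n L ++ m :: T1) ++ c :: T2.
    by rewrite -catA /= catA cat_take_drop.
  have -> : (take n L ++ c :: drop n L) ++ m :: T1 ++ T2 = take n L ++ c :: (drop n L ++ m :: T1) ++ T2.
    by rewrite -!catA.
  apply: prod_move => x xB.
  have [xu xc] : x \in u /\ rho x < rho c.
    move: xB; rewrite mem_cat inE => /or3P [xd|/eqP ->|x1].
    + split; first by rewrite eu mem_cat (mem_drop xd).
      exact: (ins_drop sL xd).
    + by split => //; rewrite eu mem_cat inE eqxx orbT.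
    + split; first by rewrite eu eT !(mem_cat, inE) x1 !orbT.
      move: sT; rewrite eT (sorted_pairwise (@lt_r_trans _ rho)) pairwise_cat allrel_consr.
      by move=> /and3P [/andP [/allP /(_ x x1) h _] _ _].
  have [h3 h4] := umin_comm pu um xu xc.
  exact: relc.
- rewrite /gm (umin_ofE pu' um') rk fE -/rho (Fg (ins rho c L) cfT cm mc) (filter_ins rho cL).
  rewrite [X in _ = X]eu; congr (_ ++ _ :: _).
  apply: (irr_sorted_eq (@lt_r_trans _ rho) (@lt_r_irr _ rho)) => //.
    rewrite sorted_rev_lt; apply: (sorted_ins inj); first by rewrite mem_rev.
    rewrite sorted_rev_gt; exact: (subseq_sorted (@lt_r_trans _ rho) (filter_subseq _ _) sT).
  move=> x; rewrite mem_rev mem_ins inE mem_rev mem_filter /=.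
  by case: (x =P c) => [->|] //=.
Qed.

End K.

Section K.
Variable k : nat.
Implicit Types (u v : word k) (x y z c a b m : 'I_k.+1) (L T R : word k).

Lemma g_left X r i u : Xleft X r (i - 1)%R u ->
  Xright X r i (gm u) /\ fm (gm u) = u.
Proof.
move=> /left_setup [c [L [m [T [[pu um d cm mc] [cnt cL cT xs nkw]]]]]].
have [su _ ai] := xs.
have [eu sl sr hU] := d.
have inj := rank_inj pu.
set rho := rank u.
set T' := rev (ins rho c (rev T)).
have gE : gm u = filter (predC1 c) L ++ m :: T'.
  rewrite /gm (umin_ofE pu um).
  by have := Fg L cT cm mc; rewrite -eu.
have p : perm_eq (gm u) u by rewrite /gm (umin_ofE pu um); exact: perm_mvr.
have e : gm u =i u := perm_mem p.
have rk : rank (gm u) = rank u := rank_eq e.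
have pu' : proper_supp (gm u) by rewrite (proper_eq e).
have um' : is_umin (gm u) c by rewrite (is_umin_eq e).
have [sT mT] := dec_T d.
have [_ uL uT] := dec_uniq d.
have cfL : c \notin filter (predC1 c) L by rewrite mem_filter /= eqxx.
have sL : sorted (gt_r rho) L.
  exact: (subseq_sorted (@gt_r_trans _ rho) (subseq_rcons L m) sl).
have cT' : c \in T' by rewrite mem_rev mem_ins inE eqxx.
have d' : dec X (rank (gm u)) (gm u) (filter (predC1 c) L) m T'.
  rewrite rk; split => //.
  - have -> : rcons (filter (predC1 c) L) m = filter (predC1 c) (rcons L m).
      by rewrite filter_rcons /= eq_sym cm.
    exact: (subseq_sorted (@gt_r_trans _ rho) (filter_subseq _ _) sl).
  - case: (X) sr => sr.
      rewrite /T' sorted_rev_lt; apply: (sorted_ins inj); first by rewrite mem_rev.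
      by rewrite sorted_rev_gt.
    rewrite /T' -(rev_ins_cons _ mc) sorted_rev_lt; apply: (sorted_ins inj).
      by rewrite mem_rev inE negb_or cm cT.
    by rewrite sorted_rev_gt.
  - move=> /hU [R' eT]; exists (rev (ins rho c (rev R'))).
    by rewrite /T' eT (rev_ins_cons _ mc).
have [hk hl hr] := dec_hook d'.
have sT' : size T' = (size T).+1 by rewrite /T' size_rev size_ins size_rev.
split.
- split; last first.
  + exists c, (size (filter (predC1 c) L)).+1; split => //.
    by rewrite hr; case: (X) => //=; rewrite inE cT' orbT.
  + by move/(kweak_eq p).
  split; first by rewrite (perm_size p).
    by split => //; exists (size (filter (predC1 c) L)).+1.
  rewrite (asc_dec d') sT'; rewrite (asc_dec d) in ai.
  case: (X) hU ai {d d' hk hl hr sr} => hU ai.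
    have [R' eT] := hU erefl; rewrite eT /= in ai *.
    by rewrite -[(size _).+1]addn1 PoszD ai subrK.
  by rewrite -[(size _).+1]addn1 PoszD ai subrK.
- rewrite /fm (umin_ofE pu' um') rk gE -/rho (Ff T' cfL cm mc).
  have -> : filter (predC1 c) T' = T.
    by rewrite /T' filter_rev (filter_ins rho) ?revK // mem_rev.
  rewrite [X in _ = X]eu; congr (_ ++ _ :: _).
  apply: (irr_sorted_eq (@gt_r_trans _ rho) (@gt_r_irr _ rho)) => //.
    apply: (sorted_ins inj) => //.
    exact: (subseq_sorted (@gt_r_trans _ rho) (filter_subseq _ _) sL).
  move=> x; rewrite mem_ins inE mem_filter /=.
  by case: (x =P c) => [->|] //=.
Qed.

End K.
Unset Implicit Arguments. Set Strict Implicit.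

Lemma part1a (k : nat) (X : htype) (r : nat) (i : int) (u : word k) :
  Xset X r i u <-> [\/ Xwc X r i u, Xleft X r i u | Xright X r i u].
Proof.
split; last by case=> -[].
move=> xs; have [su [pu [j hj]] ai] := xs.
case: (boolP (kconnected u)) => kc; first by constructor 1; split => //; left.
have [c um] := umin_exists pu kc.
case: (count_mem c u =P 2) => c2.
  by constructor 1; split => //; right; exists c.
have nkw : ~ kweak_connected u.
  move=> [h|[c' [h1 h2]]]; first by rewrite h in kc.
  by rewrite (umin_uniq pu h1 um) in h2.
have [L [m [T [d hl hr]]]] := hook_dec hj.
have cu := (umin_gap um).1.
have [eu _ _ _] := d.
move: cu; rewrite {1}eu mem_cat inE => /or3P [cL|/eqP cm|cT].
- constructor 2; split => //; exists c, j; split => //.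
  by rewrite hl mem_rcons inE cL orbT.
- constructor 2; split => //; exists c, j; split => //.
  by rewrite hl mem_rcons inE cm eqxx.
- constructor 3; split => //; exists c, j; split => //.
  by rewrite hr; case: (X) => //=; rewrite inE cT orbT.
Qed.

Lemma part1b (k : nat) (X : htype) (r : nat) (i : int) (u : word k) :
  ~ (Xwc X r i u /\ Xleft X r i u) /\
  ~ (Xwc X r i u /\ Xright X r i u) /\
  ~ (Xleft X r i u /\ Xright X r i u).
Proof.
split; first by move=> [[_ h] [_ nh _]].
split; first by move=> [[_ h] [_ nh _]].
move=> [/left_setup [c1 [L1 [m1 [T1 [[pu um1 d1 _ _] [_ cL _ _ _]]]]]]
        /right_setup [c2 [L2 [m2 [T2 [[_ um2 d2 _ _] [_ cL2 cT2 _ _]]]]]]].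
have ec := umin_uniq pu um1 um2; subst c2.
have [eu1 _ _ _] := d1; have [eu2 _ _ _] := d2.
have m1u : m1 \in u by rewrite eu1 mem_cat inE eqxx orbT.
have m2u : m2 \in u by rewrite eu2 mem_cat inE eqxx orbT.
have em : m1 = m2.
  apply: (rank_inj pu); apply/eqP; rewrite eqn_leq.
  by rewrite (dec_min d1 m2u) (dec_min d2 m1u).
subst m2.
have [h1 _ _] := dec_uniq d1; have [h2 _ _] := dec_uniq d2.
have [eL _] := dec_split h1 h2 (etrans (esym eu1) eu2).
by rewrite -eL cL in cL2.
Qed.

Lemma part3 (k : nat) (X : htype) (r : nat) (i : int) :
  [/\ forall u : word k, ~ Xright X r 0 u,
      forall u : word k, ~ Xleft HV r (Posz r - 1)%R u,
      forall u : word k, ~ Xleft HU r (Posz r - 2)%R u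
    & (i < 0)%R -> forall u : word k, ~ Xset X r i u].
Proof.
split.
- move=> u /right_setup [c [L [m [T [[pu um d cm mc] [cnt cL cT [su _ ai] _]]]]]].
  rewrite (asc_dec d) in ai.
  case: X d ai => d ai.
    have [_ _ _ hU] := d; have [R eT] := hU erefl.
    rewrite eT inE (negbTE cm) /= in cT; rewrite eT /= in ai.
    by case: R cT {eT} ai.
  by case: T cT {d} ai.
- move=> u /left_setup [c [L [m [T [[pu um d cm mc] [cnt cL cT [su _ ai] _]]]]]].
  rewrite (asc_dec d) in ai.
  have [eu _ _ _] := d.
  have : 0 < size L by case: (L) cL.
  move: su; rewrite eu size_cat /= => su; lia.
- move=> u /left_setup [c [L [m [T [[pu um d cm mc] [cnt cL cT [su _ ai] _]]]]]].
  rewrite (asc_dec d) in ai.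
  have [eu _ _ hU] := d; have [R eT] := hU erefl.
  have : 0 < size L by case: (L) cL.
  move: su ai; rewrite eu eT size_cat /= => su ai; lia.
- move=> hi u [_ _ ai]; move: hi; rewrite -ai; lia.
Qed.

Theorem lemma5p3 (k : nat) (X : htype) (r : nat) (i : int) :
  [/\ (* 1. disjoint union *)
      (forall u : word k,
         Xset X r i u <-> [\/ Xwc X r i u, Xleft X r i u | Xright X r i u]) /\
      (forall u : word k,
         ~ (Xwc X r i u /\ Xleft X r i u) /\
         ~ (Xwc X r i u /\ Xright X r i u) /\
         ~ (Xleft X r i u /\ Xright X r i u)),
      (* 2. value-preserving bijection right_i -> left_{i-1} *)
      (exists f g : word k -> word k,
         [/\ forall u, Xright X r i u -> Xleft X r (i - 1)%R (f u) /\ Ak_eq u (f u),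
             forall v, Xleft X r (i - 1)%R v -> Xright X r i (g v),
             forall u, Xright X r i u -> g (f u) = u
           & forall v, Xleft X r (i - 1)%R v -> f (g v) = v]) &
      (* 3. empty sets *)
      [/\ forall u : word k, ~ Xright X r 0 u,
          forall u : word k, ~ Xleft HV r (Posz r - 1)%R u,
          forall u : word k, ~ Xleft HU r (Posz r - 2)%R u
        & (i < 0)%R -> forall u : word k, ~ Xset X r i u]].
Proof.
split.
- split => u; [exact: part1a | exact: part1b].
- exists (@fm k), (@gm k); split.
  + by move=> u /f_right [h1 h2 _].
  + by move=> v /g_left [].
  + by move=> u /f_right [_ _].
  + by move=> v /g_left [].
- exact: part3.
Qed.
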